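(* Let $\Delta$ be a pure $d$-dimensional simplicial complex that is acyclic in positive codimension (APC), and fix $0\le i<d$. Let $\Upsilon$ be an $i$-dimensional spanning tree of $\Delta$, let $\Theta=\Delta_i\setminus\Upsilon_i$ be the set of $i$-dimensional faces of $\Delta$ not in $\Upsilon$, and let $\tilde L$ be the reduced Laplacian, i.e. the square submatrix of $L_{\Delta,i}$ with rows and columns indexed by $\Theta$. Suppose that $\tilde H_{i-1}(\Upsilon;\mathbb{Z})=0$. Then $$K_i(\Delta)\cong \mathbb{Z}^{\Theta}/\operatorname{im}\tilde L.$$
   Context: For a finite simplicial complex $\Delta$, $\Delta_i$ denotes its set of $i$-dimensional faces, $\Delta_{(i)}$ its $i$-skeleton (all faces of dimension $\le i$), and $f_i(\Delta)=|\Delta_i|$. $C_i(\Delta;\mathbb{Z})$ is the free abelian group with basis $\Delta_i$ (each face given a fixed orientation; $C_{-1}=\mathbb{Z}$ is spanned by the empty face), $\partial_i=\partial_{\Delta,i}:C_i(\Delta;\mathbb{Z})\to C_{i-1}(\Delta;\mathbb{Z})$ is the simplicial boundary map, and $\partial^*_i:C_{i-1}(\Delta;\mathbb{Z})\to C_i(\Delta;\mathbb{Z})$ is the coboundary map, i.e. the transpose of $\partial_i$ with respect to the standard bases. The ($i$-dimensional, up-down) combinatorial Laplacian is $L_{\Delta,i}=\partial_{i+1}\partial^*_{i+1}:C_i(\Delta;\mathbb{Z})\to C_i(\Delta;\mathbb{Z})$. The $i$-dimensional critical group is $K_i(\Delta)=\ker\partial_i/\operatorname{im}(\partial_{i+1}\partial^*_{i+1})$.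 $\tilde H_i$ denotes reduced simplicial homology and $\beta_i(\Delta)=\dim_{\mathbb{Q}}\tilde H_i(\Delta;\mathbb{Q})$. A complex is pure if all maximal faces have the same dimension; a pure $d$-dimensional complex is APC if $\tilde H_j(\Delta;\mathbb{Q})=0$ for all $j<d$. If $\Gamma$ is a pure $k$-dimensional complex, a subcomplex $\Upsilon\subseteq\Gamma$ with $\Upsilon_{(k-1)}=\Gamma_{(k-1)}$ is a (simplicial) spanning tree of $\Gamma$ if (1) $\tilde H_k(\Upsilon;\mathbb{Z})=0$, (2) $\tilde H_{k-1}(\Upsilon;\mathbb{Q})=0$, and (3) $f_k(\Upsilon)=f_k(\Gamma)-\beta_k(\Gamma)+\beta_{k-1}(\Gamma)$. An $i$-dimensional spanning tree of $\Delta$ is a spanning tree of the skeleton $\Delta_{(i)}$. Chains supported on $\Upsilon$ or on $\Theta$ are regarded as elements of $C_i(\Delta;\mathbb{Z})$; $C_i(\Theta;\mathbb{Z})$ denotes the span of the faces in $\Theta$, identified with $\mathbb{Z}^\Theta$. *)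

(* Defs.v *)
From HB Require Import structures.
From mathcomp Require Import all_boot all_order all_algebra.
Set Implicit Arguments. Unset Strict Implicit. Unset Printing Implicit Defensive.
Import Order.TTheory GRing.Theory Num.Theory.
Local Open Scope ring_scope.

(* A face of dimension j has j+1 vertices; we
   index faces by their SIZE k = j+1, so that k = 0 is the empty face
   (the (-1)-dimensional face spanning C_{-1} = Z). *)

Definition is_complex (V : finType) (D : {set {set V}}) : Prop :=
  set0 \in D /\ (forall s t : {set V}, s \in D -> t \subset s -> t \in D).

Definition faces (V : finType) (D : {set {set V}}) (k : nat) : {set {set V}} :=
  [set s in D | #|s| == k].

(* k-skeleton by size: all faces with at most k vertices,
   i.e. the (k-1)-skeleton Delta_(k-1). *)
Definition skel (V : finType) (D : {set {set V}}) (k : nat) : {set {set V}} :=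
  [set s in D | #|s| <= k]%N.

Definition pure (V : finType) (D : {set {set V}}) (d : nat) : Prop :=
  (forall s, s \in D -> (#|s| <= d.+1)%N) /\
  (forall s, s \in D -> exists2 t, t \in D & (s \subset t) && (#|t| == d.+1)).

(* Fixed orientation: each face is oriented by the increasing order of its
   vertices w.r.t. enum_rank.  Incidence number [s : t] of the boundary
   map: (-1)^j if t is s with its j-th vertex (0-based) removed, else 0. *)
Definition bcoef (V : finType) (s t : {set V}) : int :=
  \sum_(v in s | t == s :\ v)
     (-1) ^+ #|[set u in s | (enum_rank u < enum_rank v)%N]|.

Definition chain (R : pzRingType) (V : finType) := {ffun {set V} -> R}.

Definition supp_on (R : pzRingType) (V : finType) (S : {set {set V}})
  (c : chain R V) : Prop := forall s, s \notin S -> c s = 0.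

(* boundary map from faces of size k to faces of size k-1
   (this is \partial_{k-1}; for k = 0 it is the zero map) *)
Definition bd (R : pzRingType) (V : finType) (D : {set {set V}}) (k : nat)
  (c : chain R V) : chain R V :=
  [ffun t => if t \in faces D k.-1 then
               \sum_(s in faces D k) (bcoef s t)%:~R * c s else 0].

Definition cobd (R : pzRingType) (V : finType) (D : {set {set V}}) (k : nat)
  (c : chain R V) : chain R V :=
  [ffun s => if s \in faces D k then
               \sum_(t in faces D k.-1) (bcoef s t)%:~R * c t else 0].

(* up-down Laplacian on faces of size k:  L_{D,k-1} = bd_{k+1} cobd_{k+1} *)
Definition lap (R : pzRingType) (V : finType) (D : {set {set V}}) (k : nat)
  (c : chain R V) : chain R V := bd D k.+1 (cobd D k.+1 c).

(* vanishing reduced homology with coefficients in R in dimension k-1: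
   every (k-1)-cycle is a boundary. *)
Definition acyc (R : pzRingType) (V : finType) (D : {set {set V}}) (k : nat)
  : Prop :=
  forall c : chain R V, supp_on (faces D k) c -> bd D k c = 0 ->
    exists2 b : chain R V, supp_on (faces D k.+1) b & bd D k.+1 b = c.

(* rational reduced Betti number beta_{k-1}(D) = dim_Q H~_{k-1}(D;Q),
   computed as dim(Z_{k-1}) - dim(B_{k-1}) in the Q-vector space of
   rational chains. *)
Definition chainQ (V : finType) := {ffun {set V} -> rat^o}.

Definition chainsp (V : finType) (S : {set {set V}}) : {vspace chainQ V} :=
  (\sum_(s in S) <[ [ffun t => if t == s then (1 : rat^o) else 0%R] ]>)%VS.

Definition betti (V : finType) (D : {set {set V}}) (k : nat) : nat :=
  (\dim (chainsp (faces D k) :&: lker (linfun (bd (R := rat^o) D k)))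
   - \dim (linfun (bd (R := rat^o) D k.+1) @: chainsp (faces D k.+1)))%N.

(* spanning tree of dimension k-1 (faces of size k) of the complex G
   (G is pure of dimension k-1 in the intended use) *)
Definition spanning_tree (V : finType) (G U : {set {set V}}) (k : nat) : Prop :=
  [/\ is_complex U /\ U \subset G, skel U k.-1 = skel G k.-1,
      acyc int U k,                        (* H~_{k-1}(U;Z) = 0 *)
      acyc rat U k.-1 &                    (* H~_{k-2}(U;Q) = 0 *)
      (#|faces U k|%:Z = #|faces G k|%:Z - (betti G k)%:Z
                           + (betti G k.-1)%:Z)].

Definition restr (R : pzRingType) (V : finType) (S : {set {set V}})
  (c : chain R V) : chain R V := [ffun s => if s \in S then c s else 0].

(* A/B ≅ C/D for subgroups B ⊆ A of M and D ⊆ C of N, where C is a free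
   abelian group (here C = Z^Theta): witnessed by an additive map f : C -> A
   whose induced map C/D -> A/B is well defined, injective and surjective.
   (Since C is free, any isomorphism C/D -> A/B lifts to such an f, so this
   is equivalent to the existence of an abstract isomorphism.) *)
Definition quot_iso (M N : zmodType) (A B : M -> Prop) (C D : N -> Prop)
  : Prop :=
  exists f : N -> M,
    [/\ forall x y, C x -> C y -> f (x - y) = f x - f y,
        forall y, C y -> A (f y),
        forall y, C y -> (B (f y) <-> D y) &
        forall x, A x -> exists2 y, C y & B (x - f y)].

(* Main.v *)
Require Import Defs.
From HB Require Import structures.
From mathcomp Require Import all_boot all_order all_algebra.
From Stdlib Require Import ClassicalEpsilon.
Import Order.TTheory GRing.Theory Num.Theory.
Local Open Scope ring_scope.
Set Implicit Arguments. Unset Strict Implicit. Unset Printing Implicit Defensive.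

Section Comb.
Variable V : finType.

Definition sgn (s : {set V}) (v : V) : int :=
  (-1) ^+ #|[set u in s | (enum_rank u < enum_rank v)%N]|.

Lemma sgn_swap (s : {set V}) v w : v \in s -> w \in s -> v != w ->
  sgn s v * sgn (s :\ v) w = - (sgn s w * sgn (s :\ w) v).
Proof.
wlog lt_vw : v w / (enum_rank v < enum_rank w)%N.
  move=> H vs ws nvw.
  have [lt|le] := ltnP (enum_rank v) (enum_rank w); first exact: H.
  have lt' : (enum_rank w < enum_rank v)%N.
    rewrite ltn_neqAle le andbT; apply/negP => /eqP/val_inj/enum_rank_inj E.
    by rewrite E eqxx in nvw.
  by rewrite (H w v lt' ws vs) ?opprK // eq_sym.
move=> vs ws nvw.
rewrite /sgn.
set Av := [set u in s | _ < enum_rank v]%N.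
set Aw := [set u in s | _ < enum_rank w]%N.
have E1 : [set u in s :\ v | (enum_rank u < enum_rank w)%N] = Aw :\ v.
  by apply/setP => u; rewrite !inE andbA.
have E2 : [set u in s :\ w | (enum_rank u < enum_rank v)%N] = Av.
  apply/setP => u; rewrite !inE; case: eqP => //= ->.
  idtac.
  by rewrite ltnNge (ltnW lt_vw) andbF.
have vAw : v \in Aw by rewrite inE vs lt_vw.
rewrite E1 E2.
have := cardsD1 v Aw; rewrite vAw => /= ->.
by rewrite add1n exprS mulN1r mulNr opprK mulrC.
Qed.

Lemma core (s t : {set V}) :
  \sum_(v in s) sgn s v * bcoef (s :\ v) t = 0.
Proof.
pose g v w := if (v \in s) && (w \in s :\ v) && (t == s :\ v :\ w)
              then sgn s v * sgn (s :\ v) w else 0.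
have E : \sum_(v in s) sgn s v * bcoef (s :\ v) t = \sum_v \sum_w g v w.
  rewrite [RHS](bigID (mem s)) /= [X in _ + X]big1 ?addr0; last first.
    by move=> v /negbTE vs; apply: big1 => w _; rewrite /g vs.
  apply: eq_bigr => v vs; rewrite /bcoef big_distrr /= big_mkcond /=.
  by apply: eq_bigr => w _; rewrite /g vs.
have anti v w : g w v = - g v w.
  rewrite /g !inE.
  have Esym : s :\ v :\ w = s :\ w :\ v by rewrite !setDDl setUC.
  rewrite Esym.
  case vs : (v \in s); case ws : (w \in s); rewrite /= ?andbF ?oppr0 //.
  case: (eqVneq w v) => [->|nwv] /=; rewrite ?andbF ?oppr0 //.
  case: (t == _); rewrite ?oppr0 //.
  exact: (sgn_swap ws vs nwv).
rewrite E; set S := \sum_v _.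
have H2 : S + S = 0.
  rewrite {2}/S exchange_big /= /S -big_split /= big1 // => v _.
  by rewrite -big_split big1 // => w _; rewrite /= (anti v w) addrN.
have : S *+ 2 == 0 by rewrite mulr2n H2.
by rewrite mulrn_eq0 orFb => /eqP.
Qed.
End Comb.
Section Chains.
Variable V : finType.
Implicit Types (D U : {set {set V}}) (c x y : chain int V).

Lemma sum_bcoef D k s (g : {set V} -> int) : is_complex D -> s \in D -> #|s| = k.+1 ->
  \sum_(u in faces D k) bcoef s u * g u = \sum_(v in s) sgn s v * g (s :\ v).
Proof.
move=> [_ cD] sD cs.
rewrite /bcoef.
under eq_bigr => u _ do rewrite big_distrl /= big_mkcond /=.
rewrite exchange_big /= [RHS]big_mkcond /=; apply: eq_bigr => v _.
case vs: (v \in s) => /=; last by rewrite big1.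
rewrite -big_mkcondr /= (big_pred1 (s :\ v)) //.
move=> u /=; rewrite /faces inE.
case: (eqVneq u (s :\ v)) => [->|ne]; last by rewrite andbF.
rewrite (cD s) ?subsetDl //=.
have := cardsD1 v s; rewrite vs cs add1n => -[<-].
by rewrite eqxx.
Qed.

Lemma bdbd D k c : is_complex D -> bd D k (bd D k.+1 c) = 0.
Proof.
move=> cD; apply/ffunP => t; rewrite !ffunE; case: ifP => // _.
under eq_bigr => u uD do rewrite ffunE /= uD intz big_distrr /=.
rewrite exchange_big /= big1 // => s sD.
under eq_bigr => u _ do rewrite intz mulrCA mulrA.
rewrite -big_distrl /=.
move: sD; rewrite inE => /andP[sD /eqP cs].
by rewrite (sum_bcoef (fun u => bcoef u t) cD sD cs) core mul0r.
Qed.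

Lemma cobdcobd D k (a : chain int V) : is_complex D -> cobd D k.+1 (cobd D k a) = 0.
Proof.
move=> cD; apply/ffunP => s; rewrite !ffunE; case: ifP => // sF.
under eq_bigr => u uD do rewrite ffunE /= uD intz big_distrr /=.
rewrite exchange_big /= big1 // => t _.
under eq_bigr => u _ do rewrite intz mulrA.
rewrite -big_distrl /=.
move: sF; rewrite inE => /andP[sD /eqP cs].
by rewrite (sum_bcoef (fun u => bcoef u t) cD sD cs) core mul0r.
Qed.

Lemma bdB D k x y : bd D k (x - y) = bd D k x - bd D k y.
Proof.
apply/ffunP => t; rewrite !ffunE; case: ifP => _; rewrite ?subr0 //.
rewrite -sumrB; apply: eq_bigr => s _; by rewrite !ffunE mulrBr.
Qed.

Lemma cobdB D k x y : cobd D k (x - y) = cobd D k x - cobd D k y.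
Proof.
apply/ffunP => t; rewrite !ffunE; case: ifP => _; rewrite ?subr0 //.
rewrite -sumrB; apply: eq_bigr => s _; by rewrite !ffunE mulrBr.
Qed.

Lemma bd0 D k : bd D k (0 : chain int V) = 0.
Proof. by apply/ffunP => t; rewrite !ffunE; case: ifP => // _; rewrite big1 // => s _; rewrite ffunE mulr0. Qed.

Lemma cobd0 D k : cobd D k (0 : chain int V) = 0.
Proof. by apply/ffunP => t; rewrite !ffunE; case: ifP => // _; rewrite big1 // => s _; rewrite ffunE mulr0. Qed.

Lemma lap0 D k : lap D k (0 : chain int V) = 0.
Proof. by rewrite /lap cobd0 bd0. Qed.

Lemma bd_supp D k c : supp_on (faces D k.-1) (bd D k c).
Proof. by move=> t tn; rewrite ffunE (negbTE tn). Qed.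

Lemma cobd_supp D k c : supp_on (faces D k) (cobd D k c).
Proof. by move=> t tn; rewrite ffunE (negbTE tn). Qed.

Lemma bd_sub U D k c : faces U k \subset faces D k -> faces U k.-1 = faces D k.-1 ->
  supp_on (faces U k) c -> bd U k c = bd D k c.
Proof.
move=> sUD eUD sc; apply/ffunP => t; rewrite !ffunE eUD; case: ifP => // _.
rewrite [LHS]big_mkcond [RHS]big_mkcond /=; apply: eq_bigr => s _.
case: ifP => sU; first by rewrite (subsetP sUD).
by rewrite sc ?sU // mulr0; case: ifP.
Qed.

End Chains.

Lemma genInv n (M : 'M[int]_n) :
  (forall (x : 'rV_n) (a : int) (v : 'rV_n), a != 0 -> x *m M = a *: v ->
     exists x' : 'rV_n, x' *m M = v) ->
  exists N : 'M[int]_n, M *m N *m M = M.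
Proof.
move=> sat.
have [L uL [R uR [d _ dM]]] := int_Smith_normal_form M.
pose r := \row_(i < n) d`_i.
have eD : \matrix_(i, j) (d`_i *+ (i == j :> nat)) = diag_mx r.
  by apply/matrixP => i j; rewrite !mxE.
rewrite eD in dM; set Dg := diag_mx r in dM.
have cube : forall i, r 0 i * r 0 i * r 0 i = r 0 i.
  move=> i; case: (eqVneq (r 0 i) 0) => [->|nz]; first by rewrite !mulr0.
  pose x := (delta_mx 0 i : 'rV[int]_n) *m invmx L.
  have xM : x *m M = r 0 i *: ((delta_mx 0 i : 'rV[int]_n) *m R).
    rewrite dM /x !mulmxA mulmxKV // -rowE.
    rewrite scalemxAl; congr (_ *m _); apply/matrixP => a b; rewrite !mxE.
    rewrite (ord1 a) eqxx /=; case: (eqVneq i b) => [->|ne]; first by rewrite mulr1.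
    by rewrite mulr0.
  have [x' x'M] := sat x _ _ nz xM.
  have E : x' *m L *m Dg = (delta_mx 0 i : 'rV[int]_n).
    apply: (can_inj (mulmxK uR)); by rewrite -x'M dM !mulmxA.
  have : (x' *m L *m Dg) 0 i = 1 by rewrite E !mxE !eqxx.
  rewrite mxE (bigD1 i) //= big1 ?addr0; last first.
    by move=> a ne; rewrite !mxE (negbTE ne) mulr0.
  rewrite !mxE eqxx mulr1n => /intUnitRing.unitzPl.
  rewrite qualifE => /orP[] /eqP ->; by rewrite ?mulr1 ?mulrN1 ?opprK.
exists (invmx R *m Dg^T *m invmx L).
have DDD : Dg *m Dg *m Dg = Dg.
  rewrite /Dg !mulmx_diag; congr diag_mx; apply/matrixP => a b; rewrite !mxE.
  by have := cube b; rewrite !mxE.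
rewrite tr_diag_mx dM !mulmxA (mulmxK uR) (mulmxKV uL).
by rewrite -[in RHS]DDD !mulmxA.
Qed.

Lemma sat_chain (V : finType) (U : {set {set V}}) j (w c : chain int V) (a : int) :
  is_complex U -> acyc int U j -> supp_on (faces U j) w -> a != 0 ->
  (forall t, a * w t = bd U j.+1 c t) ->
  exists2 b, supp_on (faces U j.+1) b & bd U j.+1 b = w.
Proof.
move=> cU ac sw nz H; apply: ac => //.
apply/ffunP => t; have := congr1 (fun f : chain int V => f t) (bdbd j c cU).
rewrite [in RHS]ffunE /= => E.
have : a * bd U j w t = 0.
  rewrite -E !ffunE; case: ifP => _; rewrite ?mulr0 // big_distrr /=.
  by apply: eq_bigr => u _; rewrite mulrCA H.
by move/eqP; rewrite mulf_eq0 (negbTE nz) /= => /eqP ->; rewrite ffunE.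
Qed.

Section Bridge.
Variable V : finType.
Variable U : {set {set V}}.
Variable j : nat.
Local Notation n := #|{set V}|.

Definition Mx : 'M[int]_n := \matrix_(p, q)
  (if (enum_val p \in faces U j.+1) && (enum_val q \in faces U j)
   then bcoef (enum_val p) (enum_val q) else 0).

Definition ch (x : 'rV[int]_n) : chain int V :=
  [ffun s => if s \in faces U j.+1 then x 0 (enum_rank s) else 0].

Lemma sum_reidx (F : 'I_n -> int) : \sum_p F p = \sum_(s : {set V}) F (enum_rank s).
Proof.
rewrite (reindex (@enum_rank _)) //; exists (@enum_val _ _) => s _.
  exact: enum_rankK.
exact: enum_valK.
Qed.

Lemma rowM x t : (x *m Mx) 0 (enum_rank t) = bd U j.+1 (ch x) t.
Proof.
rewrite mxE sum_reidx ffunE /=.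
under eq_bigr => s _ do rewrite mxE !enum_rankK.
case: ifP => tU; last by rewrite big1 // => s _; rewrite andbF mulr0.
rewrite [RHS]big_mkcond /=; apply: eq_bigr => s _; rewrite andbT ffunE.
by case: ifP; rewrite ?mulr0 // intz mulrC.
Qed.

Lemma ch_supp x : supp_on (faces U j.+1) (ch x).
Proof. by move=> s sn; rewrite ffunE (negbTE sn). Qed.

Hypothesis injU : forall c : chain int V, supp_on (faces U j.+1) c ->
  bd U j.+1 c = 0 -> c = 0.
Hypothesis cU : is_complex U.
Hypothesis acU : acyc int U j.

Lemma inj_mx (x : 'rV[int]_n) : (forall p, enum_val p \notin faces U j.+1 -> x 0 p = 0) ->
  x *m Mx = 0 -> x = 0.
Proof.
move=> sx xM.
have c0 : ch x = 0.
  apply: injU; first exact: ch_supp.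
  by apply/ffunP => t; rewrite -rowM xM !mxE ffunE.
apply/matrixP => a p; rewrite (ord1 a) mxE.
case: (boolP (enum_val p \in faces U j.+1)) => pU; last exact: sx.
have := congr1 (fun f : chain int V => f (enum_val p)) c0.
by rewrite !ffunE pU enum_valK.
Qed.

Lemma sat_mx (x : 'rV[int]_n) (a : int) (v : 'rV[int]_n) : a != 0 ->
  x *m Mx = a *: v -> exists x' : 'rV_n, x' *m Mx = v.
Proof.
move=> nz xM.
pose w : chain int V := [ffun t => v 0 (enum_rank t)].
have Hw t : a * w t = bd U j.+1 (ch x) t.
  by rewrite -rowM xM !mxE ffunE.
have sw : supp_on (faces U j) w.
  move=> t tn; have := Hw t; rewrite [bd _ _ _ _]ffunE /= (negbTE tn) => /eqP.
  by rewrite mulf_eq0 (negbTE nz) /= => /eqP.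
have [b sb bb] := sat_chain cU acU sw nz Hw.
exists (\row_p b (enum_val p)).
apply/matrixP => z q; rewrite (ord1 z) -(enum_valK q) rowM.
have -> : ch (\row_p b (enum_val p)) = b.
  apply/ffunP => s; rewrite !ffunE mxE enum_rankK.
  by case: ifP => // sn; rewrite sb // sn.
by rewrite bb ffunE enum_valK.
Qed.

Lemma MN_id : exists N : 'M[int]_n, forall s e, s \in faces U j.+1 -> e \in faces U j.+1 ->
  (Mx *m N) (enum_rank s) (enum_rank e) = (s == e)%:R.
Proof.
have [N MNM] := genInv sat_mx.
exists N => s e sU eU.
pose y : 'rV[int]_n := delta_mx 0 (enum_rank s) *m Mx *m N.
pose z : 'rV[int]_n := \row_p (if enum_val p \in faces U j.+1 then y 0 p else 0).
have zM : z *m Mx = y *m Mx.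
  apply/matrixP => a q; rewrite !mxE; apply: eq_bigr => p _; rewrite !mxE.
  by rewrite (ord1 a); case: ifP; rewrite /= ?mulr0.
have ez : z = (delta_mx 0 (enum_rank s) : 'rV[int]_n).
  apply/eqP; rewrite -subr_eq0; apply/eqP; apply: inj_mx.
    move=> p pn; rewrite !mxE (negbTE pn).
    case: (eqVneq p (enum_rank s)) => [E|ne]; first by rewrite E enum_rankK sU in pn.
    by rewrite ?andbF /= subr0.
  by rewrite mulmxBl zM /y -(mulmxA _ N) -mulmxA (mulmxA Mx) MNM subrr.
have : z 0 (enum_rank e) = (s == e)%:R.
  rewrite ez mxE eqxx /=; congr (_%:R).
  by rewrite (inj_eq enum_rank_inj) eq_sym.
rewrite /z mxE enum_rankK eU /y -mulmxA -rowE mxE => ->.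
by [].
Qed.

Lemma transpose_surj (b : chain int V) : exists a : chain int V,
  forall s, s \in faces U j.+1 -> cobd U j.+1 a s = b s.
Proof.
have [N HN] := MN_id.
exists [ffun t => \sum_(e in faces U j.+1) N (enum_rank t) (enum_rank e) * b e].
move=> s sU.
have key e : \sum_(t in faces U j) bcoef s t * N (enum_rank t) (enum_rank e)
    = (Mx *m N) (enum_rank s) (enum_rank e).
  rewrite mxE sum_reidx [LHS]big_mkcond /=; apply: eq_bigr => t _.
  rewrite mxE !enum_rankK sU /=; by case: ifP; rewrite ?mul0r.
rewrite ffunE /= sU.
under eq_bigr => t _ do rewrite ffunE intz big_distrr /=.
rewrite exchange_big /=.
under eq_bigr => e eU.
  under eq_bigr => t _ do rewrite mulrA.
  rewrite -big_distrl /= key (HN s e sU eU).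
  over.
rewrite (bigD1 s) //= eqxx mul1r big1 ?addr0 // => e /andP[_ ne].
by rewrite eq_sym (negbTE ne) mul0r.
Qed.

End Bridge.

Lemma chB (V : finType) (a b : chain int V) s : (a - b) s = a s - b s.
Proof. by rewrite !ffunE. Qed.

Lemma restrE (V : finType) (S : {set {set V}}) (c : chain int V) s :
  restr S c s = if s \in S then c s else 0.
Proof. by rewrite ffunE. Qed.

Theorem mainTheorem1 (V : finType) (Delta : {set {set V}}) (d i : nat)
  (Ups : {set {set V}}) :
  is_complex Delta ->
  pure Delta d ->
  (forall k, (k <= d)%N -> acyc rat Delta k) ->     (* APC *)
  (i < d)%N ->
  spanning_tree (skel Delta i.+1) Ups i.+1 ->
  acyc int Ups i ->                                 (* H~_{i-1}(Ups;Z) = 0 *)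
  let Theta := faces Delta i.+1 :\: faces Ups i.+1 in
  quot_iso
    (fun c : chain int V => supp_on (faces Delta i.+1) c /\ bd Delta i.+1 c = 0)
    (fun c : chain int V => exists2 b : chain int V,
        supp_on (faces Delta i.+1) b & c = lap Delta i.+1 b)
    (fun c : chain int V => supp_on Theta c)
    (fun c : chain int V => exists2 b : chain int V,
        supp_on Theta b & c = restr Theta (lap Delta i.+1 b)).
Proof.
move=> cD _ _ _ [[cU sUD] skEq acU1 _ _] acU Theta.
have UD s : s \in Ups -> (s \in Delta) && (#|s| <= i.+1)%N.
  by move=> sU; have := subsetP sUD s sU; rewrite inE.
have F1 : faces Ups i.+1 \subset faces Delta i.+1.
  apply/subsetP => s; rewrite !inE => /andP[/UD /andP[-> _] ->]. by [].
have F2 j : (j <= i)%N -> faces Ups j = faces Delta j.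
  move=> ji; apply/setP => s; rewrite !inE.
  have := congr1 (fun S : {set {set V}} => s \in S) skEq; rewrite /= !inE.
  case: eqP => [cs|]; rewrite ?andbF ?andbT // cs ji (leq_trans ji (leqnSn i)) !andbT.
  by [].
have F2i := F2 i (leqnn i).
have F3 (c : chain int V) : supp_on (faces Ups i.+2) c -> c = 0.
  move=> sc; apply/ffunP => s; rewrite ffunE sc // inE.
  apply/negP => /andP[/UD /andP[_ h] /eqP e]; by rewrite e ltnn in h.
have Inj (c : chain int V) : supp_on (faces Ups i.+1) c -> bd Ups i.+1 c = 0 -> c = 0.
  move=> sc bc; have [b sb <-] := acU1 c sc bc.
  by rewrite (F3 b sb) bd0.
have bdUD (c : chain int V) : supp_on (faces Ups i.+1) c -> bd Ups i.+1 c = bd Delta i.+1 c.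
  by move=> sc; apply: bd_sub => //; rewrite /= F2i.
have Inj' (c : chain int V) : supp_on (faces Ups i.+1) c -> bd Delta i.+1 c = 0 -> c = 0.
  by move=> sc; rewrite -bdUD //; apply: Inj.
have Ex (y : chain int V) : exists w : chain int V,
    supp_on (faces Ups i.+1) w /\ bd Delta i.+1 w = bd Delta i.+1 y.
  pose c := bd Delta i.+1 y.
  have sc : supp_on (faces Ups i) c.
    by rewrite F2i => t tn; rewrite /c ffunE /= (negbTE tn).
  have bc : bd Ups i c = 0.
    rewrite (bd_sub (D := Delta)) //; first exact: bdbd.
    - by rewrite F2i.
    - by rewrite F2 // leq_pred.
  have [b sb bb] := acU c sc bc.
  by exists b; split => //; rewrite -bdUD.
pose W (y : chain int V) := proj1_sig (constructive_indefinite_description _ (Ex y)).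
have WP y : supp_on (faces Ups i.+1) (W y) /\ bd Delta i.+1 (W y) = bd Delta i.+1 y.
  exact: (proj2_sig (constructive_indefinite_description _ (Ex y))).
pose f (y : chain int V) := y - W y.
pose P (z y : chain int V) := [/\ supp_on (faces Delta i.+1) z, bd Delta i.+1 z = 0 &
   forall s, s \in Theta -> z s = y s].
have inT s : (s \in Theta) = (s \notin faces Ups i.+1) && (s \in faces Delta i.+1).
  by rewrite inE.
have Uniq z1 z2 y : P z1 y -> P z2 y -> z1 = z2.
  move=> [s1 b1 t1] [s2 b2 t2]; apply/eqP; rewrite -subr_eq0; apply/eqP.
  apply: Inj'; last by rewrite bdB b1 b2 subrr.
  move=> s sn; rewrite !ffunE.
  case sD : (s \in faces Delta i.+1); last by rewrite s1 ?s2 ?sD // subrr.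
  by rewrite t1 ?t2 ?subrr // inT sn sD.
have fP y : supp_on Theta y -> P (f y) y.
  move=> sy; have [sW bW] := WP y; split.
  - move=> s sn; have sT : s \notin Theta by rewrite inT (negbTE sn) andbF.
    have sU : s \notin faces Ups i.+1 by apply: contra sn; apply: (subsetP F1).
    by rewrite !ffunE sy // sW // subrr.
  - by rewrite bdB bW subrr.
  - by move=> s sT; rewrite !ffunE sW ?subr0 //; move: sT; rewrite inT => /andP[].
have suppT (c : chain int V) : supp_on Theta c -> supp_on (faces Delta i.+1) c.
  by move=> sc s sn; rewrite sc // inT (negbTE sn) andbF.
exists f; split.
- move=> x y Cx Cy; apply: (Uniq _ _ (x - y)).
    apply: fP => s sn; by rewrite !ffunE Cx ?Cy ?subrr.
  have [sx bx tx] := fP x Cx; have [sy by' ty] := fP y Cy.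
  split.
  + by move=> s sn; rewrite chB sx ?sy ?subrr.
  + by rewrite bdB bx by' subrr.
  + by move=> s sT; rewrite chB tx ?ty // chB.
- by move=> y Cy; have [? ? _] := fP y Cy.
- move=> y Cy; have [sf bf tf] := fP y Cy; split.
  + move=> [b sb E].
    have [a Ha] := transpose_surj Inj cU acU b.
    have cobdUD s : s \in faces Ups i.+1 -> cobd Ups i.+1 a s = cobd Delta i.+1 a s.
      by move=> sU; rewrite !ffunE sU (subsetP F1 _ sU) /= F2i.
    exists (b - cobd Delta i.+1 a).
      move=> s sn; rewrite chB.
      case sU : (s \in faces Ups i.+1).
        by rewrite -cobdUD // Ha // subrr.
      have sDn : s \notin faces Delta i.+1 by move: sn; rewrite inT sU.
      by rewrite sb // (@cobd_supp _ Delta i.+1 a s sDn) subrr.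
    have -> : lap Delta i.+1 (b - cobd Delta i.+1 a) = lap Delta i.+1 b.
      by rewrite /lap cobdB cobdcobd // subr0.
    rewrite -E; apply/ffunP => s; rewrite restrE.
    case: ifP => sT; first by rewrite tf.
    by rewrite Cy ?sT.
  + move=> [b sb E].
    have -> : f y = lap Delta i.+1 b.
      apply: (Uniq _ _ y) => //; split.
      * exact: (@bd_supp _ Delta i.+2 (cobd Delta i.+2 b)).
      * exact: bdbd.
      * by move=> s sT; rewrite E restrE sT.
    by exists b => //; apply: suppT.
- move=> x [sx bx].
  pose y := restr Theta x.
  have Cy : supp_on Theta y by move=> s sn; rewrite restrE (negbTE sn).
  exists y => //.
  have -> : f y = x.
    apply: (Uniq _ _ y); first exact: fP.
    by split => // s sT; rewrite restrE sT.
  exists 0; first by move=> s _; rewrite ffunE.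
  by rewrite subrr lap0.
Qed.
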